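(* Let $(X,d)$ be a geodesic metric space and $\epsilon\ge0$ such that for all $x,y\in X$, $s,t\ge0$ with $B(x,s)\cap B(y,t)\ne\emptyset$ there exist $\xi\in X$, $R\ge0$ with $d_H(B(x,s)\cap B(y,t),B(\xi,R))\le\epsilon$. Then for every $q\ge0$, all $x,y\in X$, every $q$-path $\mu$ from $x$ to $y$ and every geodesic $\gamma$ from $x$ to $y$, each point of $\mu$ lies within distance $2q+6\epsilon$ of some point of $\gamma$.
   Context: $B(x,r)=\{z\in X: d(x,z)\le r\}$ denotes the closed ball and $d_H$ the Hausdorff distance. For $q\ge0$, a $q$-path from $x$ to $y$ is a continuous path $\mu$ from $x$ to $y$ such that every point $z$ on $\mu$ satisfies $d(x,z)+d(z,y)\le d(x,y)+q$. *)

(* Defs.v *)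
From Stdlib Require Export Reals.
Open Scope R_scope.

Record is_metric {X : Type} (d : X -> X -> R) : Prop := {
  metric_nonneg : forall x y, 0 <= d x y;
  metric_eq0 : forall x y, d x y = 0 <-> x = y;
  metric_sym : forall x y, d x y = d y x;
  metric_tri : forall x y z, d x z <= d x y + d y z
}.

Definition cball {X : Type} (d : X -> X -> R) (x : X) (r : R) : X -> Prop :=
  fun z => d x z <= r.

(* d_H(A,B) <= eps, where d_H(A,B) = max(sup_{a in A} inf_{b in B} d(a,b),
   sup_{b in B} inf_{a in A} d(a,b)); written out: every point of each set
   has infimal distance <= eps to the other set. *)
Definition hausdorff_le {X : Type} (d : X -> X -> R) (A B : X -> Prop) (eps : R) : Prop :=
  (forall a, A a -> forall delta, 0 < delta -> exists b, B b /\ d a b <= eps + delta) /\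
  (forall b, B b -> forall delta, 0 < delta -> exists a, A a /\ d a b <= eps + delta).

Definition is_geodesic {X : Type} (d : X -> X -> R) (x y : X) (gamma : R -> X) : Prop :=
  gamma 0 = x /\ gamma (d x y) = y /\
  forall u v, 0 <= u <= d x y -> 0 <= v <= d x y -> d (gamma u) (gamma v) = Rabs (u - v).

Definition geodesic_space {X : Type} (d : X -> X -> R) : Prop :=
  forall x y, exists gamma, is_geodesic d x y gamma.

Definition continuous_path {X : Type} (d : X -> X -> R) (mu : R -> X) : Prop :=
  forall t, 0 <= t <= 1 -> forall e, 0 < e -> exists delta, 0 < delta /\
    forall s, 0 <= s <= 1 -> Rabs (s - t) < delta -> d (mu s) (mu t) < e.

Definition is_qpath {X : Type} (d : X -> X -> R) (q : R) (x y : X) (mu : R -> X) : Prop :=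
  continuous_path d mu /\ mu 0 = x /\ mu 1 = y /\
  forall t, 0 <= t <= 1 -> d x (mu t) + d (mu t) y <= d x y + q.

(* Main.v *)
Require Import Defs.
From Stdlib Require Import Reals Lra.
Open Scope R_scope.

Lemma le_lim (C K : R) : (forall de, 0 < de -> C <= K + de) -> C <= K.
Proof.
  intros H. destruct (Rle_dec C K) as [h|h]; [exact h|].
  exfalso. specialize (H ((C - K)/2)). assert (0 < (C-K)/2) by lra.
  specialize (H H0). lra.
Qed.

Theorem lemma3p4 (X : Type) (d : X -> X -> R) (eps : R)
  (Hmetric : is_metric d) (Hgeod : geodesic_space d) (Heps : 0 <= eps)
  (Hball : forall (x y : X) (s t : R), 0 <= s -> 0 <= t ->
     (exists z, cball d x s z /\ cball d y t z) ->
     exists (xi : X) (Rr : R), 0 <= Rr /\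
       hausdorff_le d (fun z => cball d x s z /\ cball d y t z) (cball d xi Rr) eps) :
  forall (q : R), 0 <= q -> forall (x y : X) (mu gamma : R -> X),
    is_qpath d q x y mu -> is_geodesic d x y gamma ->
    forall t, 0 <= t <= 1 ->
      exists u, 0 <= u <= d x y /\ d (mu t) (gamma u) <= 2 * q + 6 * eps.
Proof.
  intros q Hq x y mu gamma [_ [_ [_ Hqp]]] [G0 [GD Gi]] t Ht.
  destruct Hmetric as [Mn Me Ms Mt].
  pose proof (Hqp t Ht) as Hz.
  set (z := mu t) in *.
  assert (Ha : 0 <= d x z) by apply Mn. assert (Hb : 0 <= d y z) by apply Mn.
  assert (HD : 0 <= d x y) by apply Mn.
  pose proof (Ms z y) as Hzy.
  assert (Htri : d x y <= d x z + d y z) by (rewrite <- Hzy; apply Mt).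
  destruct (Hball x y (d x z) (d y z) Ha Hb) as [xi [Rr [HR [H1 H2]]]].
  { exists z. unfold cball. split; lra. }
  destruct (Rle_dec (d xi x) Rr) as [Hc|Hc].
  - exists 0. split; [lra|]. rewrite G0.
    apply le_lim. intros de Hde.
    destruct (H2 x Hc de Hde) as [w [[Hw1 Hw2] Hw3]]. unfold cball in *.
    pose proof (Mt x w y). pose proof (Ms w y). pose proof (Ms x w). pose proof (Ms z x).
    lra.
  - destruct (Hgeod xi x) as [g [g0 [gD gi]]].
    set (p := g Rr).
    assert (Hxp : d xi p = Rr).
    { rewrite <- g0 at 1. unfold p. rewrite gi; try lra. rewrite Rabs_left1; lra. }
    assert (Hpx : d p x = d xi x - Rr).
    { rewrite <- gD at 1. unfold p. rewrite gi; try lra. rewrite Rabs_left1; lra. }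
    set (u := Rmax 0 (d x y - d y z)).
    assert (Hu0 : 0 <= u) by apply Rmax_l.
    assert (Hu1 : d x y - d y z <= u) by apply Rmax_r.
    assert (Hu2 : u <= d x z) by (apply Rmax_lub; lra).
    assert (Hu3 : u <= d x y) by (apply Rmax_lub; lra).
    exists u. split; [lra|].
    assert (Hgx : d x (gamma u) = u).
    { rewrite <- G0 at 1. rewrite Gi; try lra. rewrite Rabs_left1; lra. }
    assert (Hgy : d y (gamma u) = d x y - u).
    { rewrite <- GD at 1. rewrite Gi; try lra. rewrite Rabs_right; lra. }
    apply le_lim. intros de0 Hde0. set (de := de0/6). assert (Hde : 0 < de) by (unfold de; lra).
    destruct (H2 p (ltac:(unfold cball; lra)) de Hde) as [w1 [[_ Hw1] Hw1']].
    assert (Hxx : cball d xi Rr xi) by (unfold cball; rewrite (proj2 (Me xi xi)); auto).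
    destruct (H2 xi Hxx de Hde) as [w2 [[Hw2 _] Hw2']].
    destruct (H1 z (ltac:(unfold cball; lra)) de Hde) as [b1 [Hb1 Hb1']].
    destruct (H1 (gamma u) (ltac:(unfold cball; lra)) de Hde) as [b2 [Hb2 Hb2']].
    unfold cball in *.
    pose proof (Mt x p y). pose proof (Mt p w1 y). pose proof (Mt xi w2 x).
    pose proof (Mt z b1 xi). pose proof (Mt xi b2 (gamma u)). pose proof (Mt z xi (gamma u)).
    pose proof (Ms p x). pose proof (Ms p w1). pose proof (Ms w1 y). pose proof (Ms w2 x).
    pose proof (Ms xi w2). pose proof (Ms b1 xi). pose proof (Ms b2 (gamma u)).
    pose proof (Ms p y). pose proof (Ms xi x).
    unfold de in *. lra.
Qed.
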